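(* Let $G=(V,E)$ be a $d$-regular $\epsilon$-spectral expander on $2n$ vertices with $0<\epsilon<1/2$ and $\epsilon n$ an integer. Then the number $m((1-\epsilon)n)$ of matchings of $G$ with exactly $(1-\epsilon)n$ edges satisfies $$m((1-\epsilon)n)\geq\left(\frac de\right)^{n(1-\epsilon)}e^{-2\epsilon n}.$$
   Context: For a graph on $2n$ vertices with adjacency matrix $A$ and degree matrix $D$, $\tilde A=D^{-1/2}AD^{-1/2}$ has eigenvalues $\lambda_1\geq\dots\geq\lambda_{2n}$, $\sigma_2(\tilde A)=\max\{\lambda_2,|\lambda_{2n}|\}$, and the graph is an $\epsilon$-spectral expander if $\sigma_2(\tilde A)\leq\epsilon$. *)

(* Defs.v *)
From mathcomp Require Import all_boot all_order all_algebra.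
From mathcomp Require Import all_classical all_reals all_analysis.
Set Implicit Arguments. Unset Strict Implicit. Unset Printing Implicit Defensive.
Import Order.TTheory GRing.Theory Num.Theory.
Local Open Scope ring_scope.

Definition simple_graph (N : nat) (e : rel 'I_N) : Prop :=
  irreflexive e /\ symmetric e.

Definition deg (N : nat) (e : rel 'I_N) (v : 'I_N) : nat := #|[set u | e v u]|.

Definition regular (N : nat) (e : rel 'I_N) (d : nat) : Prop :=
  forall v, deg e v = d.

Definition adjmx (R : realType) (N : nat) (e : rel 'I_N) : 'M[R]_N :=
  \matrix_(i, j) (e i j)%:R.

(* D^{-1/2} A D^{-1/2}, entrywise A_ij / (sqrt d_i * sqrt d_j) *)
Definition norm_adjmx (R : realType) (N : nat) (e : rel 'I_N) : 'M[R]_N :=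
  \matrix_(i, j) (adjmx R e i j / (Num.sqrt (deg e i)%:R * Num.sqrt (deg e j)%:R)).

(* sigma_2(M) <= eps, where the eigenvalues of M (with multiplicity, i.e. the
   roots of the characteristic polynomial) are lambda_1 >= ... >= lambda_N
   and sigma_2 = max(lambda_2, |lambda_N|). *)
Definition sigma2_le (R : realType) (N : nat) (M : 'M[R]_N) (eps : R) : Prop :=
  exists s : seq R,
    [/\ size s = N, sorted (>=%R) s,
        char_poly M = \prod_(x <- s) ('X - x%:P)
      & Num.max (nth 0 s 1) `|nth 0 s N.-1| <= eps].

Definition spectral_expander (R : realType) (N : nat) (e : rel 'I_N) (eps : R)
  : Prop := sigma2_le (norm_adjmx R e) eps.

Definition edge_set (N : nat) (e : rel 'I_N) : {set {set 'I_N}} :=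
  [set [set u; v] | u in 'I_N, v in 'I_N & e u v].

Definition is_matching (N : nat) (e : rel 'I_N) (M : {set {set 'I_N}}) : bool :=
  (M \subset edge_set e) && finset.trivIset M.

Definition nmatchings (N : nat) (e : rel 'I_N) (j : nat) : nat :=
  #|[set M : {set {set 'I_N}} | is_matching e M && (#|M| == j)]|.

(* Main.v *)
Require Import Defs.
From mathcomp Require Import all_boot all_order all_algebra.
From mathcomp Require Import all_classical all_reals all_analysis.
From mathcomp.real_closed Require Import complex.
From mathcomp Require Import ring lra zify.
Set Implicit Arguments. Unset Strict Implicit. Unset Printing Implicit Defensive.
Import Order.TTheory GRing.Theory Num.Theory.

Lemma induct_bound (n k d : nat) (f : nat -> nat) : 1 <= f 0 ->
  (forall i, i < n - k -> f i * d * (n - i) * (n - k - i) <= f i.+1 * i.+1 * n) ->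
  forall j, j <= n - k -> d ^ j * n ^_ j * (n - k) ^_ j <= f j * j`! * n ^ j.
Proof.
move=> f0 step; elim => [|j IH] Hj; first by rewrite !muln1.
have Hj' : j < n - k by [].
have := step j Hj'; have := IH (ltnW Hj').
rewrite expnS !ffactnSr factS expnS.
set A := d ^ j; set B := n ^_ j; set C := (n - k) ^_ j; set F := f j; set G := f j.+1.
set X := j`!; set Y := n ^ j.
move=> H1 H2.
apply: (@leq_trans (F * X * Y * (d * (n - j) * (n - k - j)))).
  have -> : d * A * (B * (n - j)) * (C * (n - k - j)) = A * B * C * (d * (n - j) * (n - k - j)) by ring.
  by rewrite leq_mul2r H1 orbT.
have -> : F * X * Y * (d * (n - j) * (n - k - j)) = X * Y * (F * d * (n - j) * (n - k - j)) by ring.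
have -> : G * (j.+1 * X) * (n * Y) = X * Y * (G * j.+1 * n) by ring.
by rewrite leq_mul2l H2 orbT.
Qed.

Local Notation cover := finset.cover.
Local Notation subsetP := fintype.subsetP.
Local Notation bigcupP := finset.bigcupP.
Local Notation imsetP := finset.imsetP.
Local Notation imset2P := finset.imset2P.
Local Notation set0 := finset.set0.
Local Notation subUset := finset.subUset.
Local Notation sub1set := finset.sub1set.

Lemma card_sigma (A B : finType) (X : {set A}) (Y : A -> {set B}) :
  #|[set q : A * B | (q.1 \in X) && (q.2 \in Y q.1)]| = (\sum_(a in X) #|Y a|)%N.
Proof.
rewrite -sum1_card (eq_bigr (fun a => \sum_(b in Y a) 1)%N); last first.
  by move=> a _; rewrite sum1_card.
rewrite pair_big_dep; apply: eq_bigl => -[a b] /=; by rewrite inE.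
Qed.

Section Comb.
Variable N : nat.
Variable e : rel 'I_N.
Hypothesis eirr : irreflexive e.
Local Notation T := 'I_N.

Definition Mset (i : nat) := [set M : {set {set T}} | is_matching e M && (#|M| == i)].
Definition pairsIn (S : {set T}) := [set p : T * T | [&& e p.1 p.2, p.1 \in S & p.2 \in S]].

Lemma edge_setP (A : {set T}) : A \in edge_set e -> exists u v, [/\ e u v, u != v & A = [set u; v]].
Proof.
case/imset2P => u v _; rewrite inE => euv ->; exists u, v; split => //.
by apply: contraTneq euv => ->; rewrite eirr.
Qed.

Lemma matching_set0 M : is_matching e M -> (finset.set0 : {set T}) \notin M.
Proof.
case/andP => /subsetP sub _; apply/negP => /sub /edge_setP [u [v [_ _ /setP/(_ u)]]].
by rewrite !inE eqxx.
Qed.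

Lemma card_cover_matching M : is_matching e M -> #|cover M| = (#|M| * 2)%N.
Proof.
move=> Mm; have := Mm; case/andP => /subsetP sub tiM.
apply: card_uniform_partition.
  by move=> A /sub /edge_setP [u [v [_ uv ->]]]; rewrite cards2 uv.
by rewrite /finset.partition eqxx tiM matching_set0.
Qed.

Lemma notin_cover (M : {set {set T}}) (u : T) (B : {set T}) : u \notin cover M -> B \in M -> u \notin B.
Proof.
move=> uM BM; apply: contra uM => uB; apply/bigcupP; by exists B.
Qed.

Lemma extend_matching (M : {set {set T}}) (u v : T) : is_matching e M -> e u v ->
  u \notin cover M -> v \notin cover M ->
  is_matching e ([set u; v] |: M) /\ [set u; v] \notin M.
Proof.
move=> Mm euv uM vM; have := Mm; case/andP => sub tiM.
have [ti nin] : finset.trivIset ([set u; v] |: M) /\ [set u; v] \notin M.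
  apply: trivIsetU1 => //; last exact: matching_set0.
  move=> B BM; rewrite -setI_eq0; apply/eqP/setP => x; rewrite !inE.
  apply/negP => /andP[/orP[] /eqP -> ].
    by move/negP: (notin_cover uM BM).
  by move/negP: (notin_cover vM BM).
split => //; rewrite /is_matching ti andbT.
rewrite subUset sub andbT sub1set; apply/imset2P; exists u v => //.
by rewrite inE.
Qed.

Lemma double_count i :
  (\sum_(M in Mset i) #|pairsIn (~: cover M)| <= 2 * i.+1 * #|Mset i.+1|)%N.
Proof.
rewrite -card_sigma.
set P1 := [set q | _].
pose S2 (M : {set {set T}}) := [set p : T * T | (p.1 != p.2) && ([set p.1; p.2] \in M)].
pose P2 := [set q : {set {set T}} * (T * T) | (q.1 \in Mset i.+1) && (q.2 \in S2 q.1)].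
pose F (q : {set {set T}} * (T * T)) := ([set q.2.1; q.2.2] |: q.1, q.2).
apply: (@leq_trans #|P2|).
  rewrite -(card_in_imset (f := F)); last first.
    move=> [M1 [u1 v1]] [M2 [u2 v2]]; rewrite !inE /= => /andP[_] /and3P[_ u1M v1M].
    move=> /andP[_] /and3P[_ u2M v2M] [] EM E1 E2; subst u2 v2.
    have n1 : [set u1; v1] \notin M1.
      apply/negP => H; move/negP: (notin_cover u1M H); by rewrite !inE eqxx.
    have n2 : [set u1; v1] \notin M2.
      apply/negP => H; move/negP: (notin_cover u2M H); by rewrite !inE eqxx.
    by rewrite -(setU1K n1) EM setU1K.
  apply: subset_leq_card; apply/subsetP => _ /imsetP [[M [u v]]] /[swap] -> .
  rewrite !inE /= => /andP[/andP[Mm /eqP cM]] /and3P[euv uM vM].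
  have [Mm' nin] := extend_matching Mm euv uM vM.
  rewrite Mm' cardsU1 nin cM eqxx /= andbT add1n eqxx /=.
  by apply: contraTneq euv => ->; rewrite eirr.
rewrite card_sigma.
apply: (@leq_trans (\sum_(M in Mset i.+1) 2 * i.+1)%N).
  apply: leq_sum => M; rewrite inE => /andP[_ /eqP cM].
  pose g (p : T * T) := ([set p.1; p.2], (p.1 < p.2)%N).
  have c2 : #|[set: bool]| = 2 by rewrite cardsT card_bool.
  rewrite -cM mulnC -c2 -cardsX -(card_in_imset (f := g)).
    apply: subset_leq_card; apply/subsetP => _ /imsetP [p] /[swap] ->.
    by rewrite !inE /= => /andP[_ ->].
  move=> [u v] [u' v']; rewrite !inE /= => /andP[uv _] /andP[uv' _] [E lt].
  have : u' \in [set u; v] by rewrite E !inE eqxx.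
  have : v' \in [set u; v] by rewrite E !inE eqxx orbT.
  rewrite !inE => /orP[] /eqP Ev /orP[] /eqP Eu; subst; rewrite ?eqxx in uv' *; try done.
  by move: lt uv; case: ltngtP => // /val_inj ->; rewrite eqxx.
by rewrite bigop.sum_nat_const mulnC.
Qed.

End Comb.

Local Open Scope ring_scope.

Section SpecS.
Local Open Scope sesquilinear_scope.
Variable R : rcfType.
Local Notation C := (R[i]).
Local Notation toC := (real_complex R).

Lemma toC_real (x : R) : (toC x : C) \is Num.real.
Proof. by rewrite realE !lecE /= eqxx /= le_total. Qed.

Lemma toC_conj (x : R) : (toC x : C)^* = toC x.
Proof. exact/CrealP/toC_real. Qed.

Lemma quad_ge N (B : 'M[R]_N) (s : seq R) (c : R) (v : 'rV[R]_N) :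
  B^T = B -> char_poly B = \prod_(x <- s) ('X - x%:P) ->
  (forall x, x \in s -> c <= x) ->
  c * (v *m v^T) 0 0 <= (v *m B *m v^T) 0 0.
Proof.
move=> Bsym Bchar Bge.
pose Bc := map_mx toC B.
have Bnorm : Bc \is normalmx.
  apply: symmetric_normalmx.
    apply/is_hermitianmxP; rewrite expr0 scale1r.
    by apply/matrixP => i j; rewrite !mxE -[in LHS]Bsym mxE.
  by apply/(@mxOverP N N C Num.real) => i j; rewrite mxE toC_real.
pose P := spectralmx Bc; pose D := spectral_diag Bc.
have /orthomx_spectralP HBc := Bnorm.
have Pu : P \is unitarymx := spectral_unitarymx Bc.
have Punit : P \in unitmx := spectral_unit Bc.
have invP : invmx P = P^t* := invmx_unitary Pu.
have PtP : P^t* *m P = 1%:M by rewrite -invP mulVmx.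
have eigD : forall j, exists2 x, x \in s & D 0 j = toC x.
  move=> j.
  have ev : eigenvalue Bc (D 0 j).
    apply/eigenvalueP; exists (row j P).
      rewrite [in LHS]HBc !mulmxA -row_mul mulmxV // row1 -rowE row_diag_mx.
      by rewrite -scalemxAl -rowE.
    apply/negP => /eqP r0.
    have := row_mul j P (invmx P); rewrite r0 mul0mx mulmxV // row1.
    move/matrixP => /(_ 0 j); rewrite !mxE eqxx /= => /eqP.
    by rewrite eqxx oner_eq0.
  move: ev; rewrite eigenvalue_root_char /Bc -map_char_poly Bchar rmorph_prod.
  rewrite (eq_bigr (fun x => 'X - (toC x)%:P)); last by move=> x _ /=; rewrite map_polyXsubC.
  by rewrite -(big_map toC xpredT (fun y => 'X - y%:P)) root_prod_XsubC => /mapP.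
pose vc := map_mx toC v.
have vcT : (v^T)^toC = vc^t*.
  by apply/matrixP => i j; rewrite !mxE toC_conj.
have entC : forall M : 'M[R]_(1,1), toC (M 0 0) = (map_mx toC M) 0 0.
  by move=> M; rewrite mxE.
pose w := vc *m P^t*.
have wT : w^t* = P *m vc^t* by rewrite /w trmx_mul map_mxM trmxCK.
have E1 : toC ((v *m B *m v^T) 0 0) = (w *m diag_mx D *m w^t*) 0 0.
  rewrite entC !map_mxM vcT -/Bc HBc invP wT /w !mulmxA.
  done.
have E2 : toC ((v *m v^T) 0 0) = (w *m w^t*) 0 0.
  rewrite entC !map_mxM vcT wT /w !mulmxA -[vc *m _ *m P]mulmxA PtP mulmx1.
  done.
rewrite -lecR rmorphM /= E1 E2; clearbody w.
rewrite mul_mx_diag !mxE big_distrr /=.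
apply: ler_sum => k _; rewrite !mxE.
have [x xs ->] := eigD k.
rewrite [X in _ <= X]mulrAC [X in _ <= X]mulrC -subr_ge0 -mulrBl mulr_ge0 ?mul_conjC_ge0 //.
by rewrite -rmorphB ler0c subr_ge0 Bge.
Qed.
End SpecS.

Lemma fact_le_pow (k n : nat) : (k <= n)%N -> (k`! <= n ^ k)%N.
Proof.
elim: k => [//|k IH] Hk.
rewrite factS expnS leq_mul //; exact: IH (ltnW Hk).
Qed.

Lemma pow_le_fact_exp (R : realType) (n : nat) :
  (n ^ n)%:R <= (n`!)%:R * expR (n%:R) :> R.
Proof.
case: n => [|m]; first by rewrite expn0 fact0 mul1r expR0.
have := @expR_ge1Dxn R (m.+1)%:R m (ler0n _ _).
rewrite -natrX => H.
have Hf : 0 < (m.+1)`!%:R :> R by rewrite ltr0n fact_gt0.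
rewrite -ler_pdivrMl // mulrC.
apply: le_trans H; rewrite lerDr //.
Qed.

Lemma final_real (R : realType) (n k d f : nat) : (k <= n)%N ->
  (d ^ (n-k) * n ^_ (n-k) <= f * n ^ (n-k))%N ->
  (d%:R / expR 1) ^+ (n - k) * expR (- 2 * k%:R) <= f%:R :> R.
Proof.
move=> kn H; set j := (n - k)%N.
have nj0 : (0 < n ^ j)%N by rewrite expn_gt0 /j; case: n kn {H j} => // ? ; rewrite leqn0 => /eqP ->.
have R1 : (n ^ j)%:R <= (n ^_ j)%:R * expR ((j + 2 * k)%N%:R) :> R.
  have kf : (k`! * n ^ j <= n ^ n)%N.
    have -> : (n ^ n = n ^ k * n ^ j)%N by rewrite -expnD /j subnKC.
    by rewrite leq_mul2r fact_le_pow ?orbT.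
  have Hf : 0 < k`!%:R :> R by rewrite ltr0n fact_gt0.
  rewrite -(ler_pM2l Hf) mulrA -!natrM.
  apply: le_trans (_ : _ <= (n ^ n)%:R) _; first by rewrite ler_nat.
  have -> : (k`! * n ^_ j = n`!)%N.
    by rewrite mulnC -(ffact_fact (leq_subr k n)) /j subKn.
  apply: le_trans (pow_le_fact_exp R n) _.
  rewrite ler_wpM2l // ler_expR ler_nat /j; lia.
have Hn : 0 < (n ^ j)%:R :> R by rewrite ltr0n.
have R2 : (n ^ j)%:R * expR (- (j + 2 * k)%N%:R) <= (n ^_ j)%:R :> R.
  by rewrite expRN ler_pdivrMr ?expR_gt0.
have -> : (d%:R / expR 1) ^+ j * expR (- 2 * k%:R) =
   d%:R ^+ j * expR (- (j + 2 * k)%N%:R) :> R.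
  rewrite expr_div_n -expRM_natl mulr1 natrD natrM opprD.
  by rewrite -mulrA -expRN -expRD; congr (_ * expR _); ring.
rewrite -(ler_pM2r Hn) -mulrA (mulrC (expR _)).
apply: le_trans (_ : _ <= d%:R ^+ j * (n ^_ j)%:R) _.
  by rewrite ler_wpM2l // exprn_ge0.
by rewrite -natrX -!natrM ler_nat.
Qed.

Lemma sum_card (R : numDomainType) (T : finType) (P : pred T) :
  \sum_x ((P x)%:R : R) = #|[set x | P x]|%:R.
Proof.
rewrite -sum1_card natr_sum [RHS]big_mkcond /=; apply: eq_bigr => x _.
by rewrite inE; case: (P x).
Qed.

Lemma e11B (R : numDomainType) (A B : 'M[R]_(1,1)) : (A - B) 0 0 = A 0 0 - B 0 0.
Proof. by rewrite !mxE. Qed.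
Lemma e11D (R : numDomainType) (A B : 'M[R]_(1,1)) : (A + B) 0 0 = A 0 0 + B 0 0.
Proof. by rewrite !mxE. Qed.
Lemma e11Z (R : numDomainType) (a : R) (A : 'M[R]_(1,1)) : (a *: A) 0 0 = a * A 0 0.
Proof. by rewrite !mxE. Qed.

Section B.
Variable R : realType.
Variable N : nat.
Variable e : rel 'I_N.
Variable d : nat.
Hypothesis sg : simple_graph e.
Hypothesis reg : regular e d.
Hypothesis d0 : (0 < d)%N.

Local Notation Mn := (norm_adjmx R e).

Lemma MnE u w : Mn u w = (e u w)%:R / d%:R.
Proof.
rewrite !mxE !reg -expr2 sqr_sqrtr //.
Qed.

Lemma Mn_sym : Mn^T = Mn.
Proof.
case: sg => _ esym.
by apply/matrixP => u w; rewrite mxE !MnE esym.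
Qed.

Lemma Mn_rows : Mn *m (const_mx 1 : 'rV[R]_N)^T = (const_mx 1 : 'rV[R]_N)^T.
Proof.
apply/matrixP => u z; rewrite !mxE.
rewrite (eq_bigr (fun w => (e u w)%:R / d%:R)); last first.
  by move=> w _; rewrite !mxE !reg -expr2 sqr_sqrtr // mulr1.
rewrite -mulr_suml sum_card.
have := reg u; rewrite /deg => ->.
by rewrite divff // pnatr_eq0 -lt0n.
Qed.

Lemma roots_ge (eps : R) : (0 < N)%N -> spectral_expander e eps ->
  exists s : seq R, char_poly Mn = \prod_(x <- s) ('X - x%:P) /\
    forall x, x \in s -> - eps <= x.
Proof.
move=> N0 [s [sz srt cp mx]]; exists s; split => // x xs.
have [i ilt <-] : exists2 i, (i < size s)%N & nth 0 s i = x.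
  by exists (index x s); [rewrite index_mem | rewrite nth_index].
have leT_tr : transitive (>=%R : rel R) by move=> a b c /= h1 h2; apply: le_trans h2 h1.
have sp : (0 < size s)%N by apply: leq_ltn_trans ilt.
have H : nth 0 s (size s).-1 <= nth 0 s i.
  apply: (sorted_leq_nth leT_tr (fun a => lexx a) 0 srt).
  - by rewrite inE.
  - rewrite inE /=; lia.
  - lia.
apply: le_trans H; rewrite sz.
have := mx; rewrite ge_max => /andP[_].
by move=> h; rewrite lerNl; apply: le_trans h; rewrite -normrN ler_norm.
Qed.

Lemma pairs_bound (eps : R) (S : {set 'I_N}) : (0 < N)%N ->
  spectral_expander e eps ->
  d%:R * ((#|S|%:R)^+2 / N%:R - eps * (#|S|%:R - (#|S|%:R)^+2 / N%:R))
    <= (#|pairsIn e S|)%:R :> R.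
Proof.
move=> N0 se; have [sl [cp sge]] := roots_ge N0 se.
set sS : R := #|S|%:R.
pose o : 'rV[R]_N := const_mx 1.
pose a : 'rV[R]_N := \row_u (u \in S)%:R.
pose t : R := sS / N%:R.
pose v := a - t *: o.
have := quad_ge v Mn_sym cp sge.
have Mo := Mn_rows.
have oM : o *m Mn = o.
  by have := congr1 trmx Mo; rewrite trmx_mul !trmxK Mn_sym.
have vT : v^T = a^T - t *: o^T by rewrite linearB linearZ.
have E1 : (v *m Mn *m v^T) 0 0 = (a *m Mn *m a^T) 0 0 - t * (a *m o^T) 0 0
     - t * (o *m a^T) 0 0 + (t * t) * (o *m o^T) 0 0.
  rewrite vT /v mulmxBl -scalemxAl oM mulmxBr !mulmxBl -!scalemxAl -!scalemxAr.
  have Mo' : Mn *m o^T = o^T := Mo.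
  rewrite -[a *m Mn *m o^T]mulmxA Mo' !e11B !e11Z; ring.
have E2 : (v *m v^T) 0 0 = (a *m a^T) 0 0 - t * (a *m o^T) 0 0
     - t * (o *m a^T) 0 0 + (t * t) * (o *m o^T) 0 0.
  rewrite vT /v mulmxBr !mulmxBl -!scalemxAl -!scalemxAr.
  rewrite !e11B !e11Z; ring.
rewrite E1 E2.
have sum_in : \sum_x (((x \in S) : bool)%:R : R) = sS.
  by rewrite sum_card; congr (_%:R); apply: eq_card => x; rewrite inE.
have al : (a *m o^T) 0 0 = sS.
  rewrite mxE -sum_in; apply: eq_bigr => x _; by rewrite !mxE mulr1.
have be : (o *m a^T) 0 0 = sS.
  rewrite mxE -sum_in; apply: eq_bigr => x _; by rewrite !mxE mul1r.
have rh : (a *m a^T) 0 0 = sS.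
  rewrite mxE -sum_in; apply: eq_bigr => x _; rewrite !mxE.
  by case: (x \in S); rewrite ?mulr1 ?mulr0.
have ga : (o *m o^T) 0 0 = N%:R.
  rewrite mxE (eq_bigr (fun _ => 1)); last by move=> x _; rewrite !mxE mulr1.
  by rewrite sumr_const card_ord.
have dpos : 0 < d%:R :> R by rewrite ltr0n.
have Qe : (a *m Mn *m a^T) 0 0 = #|pairsIn e S|%:R / d%:R.
  rewrite /pairsIn -sum_card -(pair_bigA _ (fun u w => ([&& e u w, u \in S & w \in S])%:R)).
  rewrite mxE [in RHS]exchange_big /= mulr_suml; apply: eq_bigr => w _.
  rewrite mxE !mulr_suml; apply: eq_bigr => u _.
  rewrite !mxE !reg -expr2 sqr_sqrtr //.
  by case: (e u w); case: (u \in S); case: (w \in S); rewrite /= ?mulr1 ?mulr0 ?mul0r ?mul1r.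
rewrite al be rh ga Qe.
set X : R := #|pairsIn e S|%:R.
have N0' : N%:R != 0 :> R by rewrite pnatr_eq0 -lt0n.
have ht1 : t * sS = sS ^+ 2 / N%:R by rewrite /t; field.
have ht2 : t * t * N%:R = sS ^+ 2 / N%:R by rewrite /t; field.
rewrite ht1 ht2.
set Y := sS ^+ 2 / N%:R.
have -> : sS - Y - Y + Y = sS - Y by ring.
have -> : X / d%:R - Y - Y + Y = X / d%:R - Y by ring.
rewrite mulNr; set Z := eps * (sS - Y).
move=> H.
have -> : X = d%:R * (X / d%:R) by field; rewrite pnatr_eq0 -lt0n.
rewrite ler_wpM2l //; lra.
Qed.

End B.

Lemma step_bound (R : realType) (n d k : nat) (e : rel 'I_(2 * n)) (eps : R) :
  simple_graph e -> regular e d -> 0 < eps -> eps * n%:R = k%:R ->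
  spectral_expander e eps ->
  forall i, (i < n - k)%N ->
  (nmatchings e i * d * (n - i) * (n - k - i) <= nmatchings e i.+1 * i.+1 * n)%N.
Proof.
move=> sg reg eps0 epsk se i ilt.
have [->|d0] := posnP d; first by rewrite !muln0 !mul0n.
have N0 : (0 < 2 * n)%N by lia.
have eirr : irreflexive e by case: sg.
have dc := double_count eirr i.
have Hsum : (nmatchings e i)%:R * (d%:R * (((2 * n - 2 * i)%N%:R)^+2 / (2 * n)%N%:R
   - eps * ((2 * n - 2 * i)%N%:R - ((2 * n - 2 * i)%N%:R)^+2 / (2 * n)%N%:R)))
   <= (2 * i.+1 * nmatchings e i.+1)%N%:R :> R.
  apply: le_trans (_ : _ <= (\sum_(M in Mset e i) #|pairsIn e (~: cover M)|)%N%:R) _; last first.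
    by rewrite ler_nat.
  rewrite natr_sum /nmatchings -/(Mset e i) mulr_natl -sumr_const.
  apply: ler_sum => M; rewrite inE => /andP[Mm /eqP cM].
  have cS : #|~: cover M| = (2 * n - 2 * i)%N.
    have := cardsC (cover M); rewrite (card_cover_matching eirr Mm) cM.
    have -> : #|'I_(2 * n)| = (2 * n)%N by rewrite card_ord.
    lia.
  rewrite -cS; exact: pairs_bound.
have iln : (i <= n)%N by lia.
have ikn : (k + i <= n)%N by lia.
rewrite -(ler_nat R) !natrM (natrB _ iln) natrB; last by lia.
move: Hsum; rewrite !natrM natrB; last by lia.
rewrite !natrM.
set nr : R := n%:R; set ir : R := i%:R; set kr : R := k%:R; set dr : R := d%:R.
set F0 : R := (nmatchings e i)%:R; set F1 : R := (nmatchings e i.+1)%:R.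
have nr0 : 0 < nr by rewrite ltr0n; lia.
have F00 : 0 <= F0 by [].
have dr0 : 0 <= dr by [].
have nir : 0 <= nr - ir by rewrite subr_ge0 ler_nat.
have eik : eps * ir <= kr.
  by rewrite /kr -epsk ler_wpM2l ?(ltW eps0) // /ir ler_nat.
have -> : 2%:R * nr - 2%:R * ir = 2 * (nr - ir) by ring.
set L := dr * _.
have HL : L * nr = 2 * dr * (nr - ir) * ((nr - ir) - eps * ir).
  rewrite /L; field; by rewrite ?pnatr_eq0 -?lt0n; lia.
move=> Hsum.
have H1 : F0 * L * nr <= 2%:R * (i.+1)%:R * F1 * nr.
  by apply: ler_wpM2r; [exact: ltW|exact: Hsum].
rewrite -mulrA HL in H1.
have H2 : F0 * (dr * (nr - ir) * (nr - kr - ir)) <= F0 * (dr * (nr - ir) * ((nr - ir) - eps * ir)).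
  apply: ler_wpM2l => //; apply: ler_wpM2l; first exact: mulr_ge0.
  lra.
rewrite natrB; last by lia.
set P := F0 * (dr * (nr - ir) * ((nr - ir) - eps * ir)) in H2.
set Q := F0 * (dr * (nr - ir) * (nr - kr - ir)) in H2.
set W := i.+1%:R * F1 * nr.
have H1' : 2 * P <= 2 * W.
  have <- : F0 * (2 * dr * (nr - ir) * (nr - ir - eps * ir)) = 2 * P by rewrite /P; ring.
  by have <- : 2%:R * i.+1%:R * F1 * nr = 2 * W by rewrite /W; ring.
have -> : F0 * dr * (nr - ir) * (n%:R - kr - ir) = Q by rewrite /Q; ring.
have -> : F1 * i.+1%:R * nr = W by rewrite /W; ring.
lra.
Qed.

Theorem lemma4p1 (R : realType) (n d k : nat) (e : rel 'I_(2 * n)) (eps : R) :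
  simple_graph e -> regular e d ->
  0 < eps -> eps < 2^-1 ->
  eps * n%:R = k%:R ->
  spectral_expander e eps ->
  ((d%:R / expR 1) ^+ (n - k) * expR (- 2 * k%:R) <= (nmatchings e (n - k))%:R :> R).
Proof.
move=> sg reg eps0 epsh epsk se.
have kn : (k <= n)%N.
  rewrite -(ler_nat R) -epsk.
  have : 0 <= n%:R :> R by [].
  have : eps <= 1 by apply: (le_trans (ltW epsh)); rewrite invf_le1 // ler1n.
  nra.
apply: final_real => //.
have f0 : (1 <= nmatchings e 0)%N.
  rewrite /nmatchings; apply/card_gt0P; exists finset.set0.
  rewrite inE /is_matching finset.sub0set cards0 eqxx andbT /=.
  by apply/finset.trivIsetP => A B; rewrite inE.
have := induct_bound f0 (step_bound sg reg eps0 epsk se) (leqnn (n - k)).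
rewrite ffactnn -[(nmatchings e _ * _ * _)%N]mulnAC leq_pmul2r //.
exact: fact_gt0.
Qed.
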